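(* Let $p,k,q,n$ be positive integers. If there exist a partition of $\{1,\dots,q\}$ into $n$ weakly sum-free subsets and a partition of $\{1,\dots,p\}$ into $k$ sum-free subsets, then there exists a partition of $\{1,\dots, p(q+\lceil q/2\rceil+1)+q\}$ into $n+k$ weakly sum-free subsets.
   Context: A set $A \subseteq \mathbb{N}$ is sum-free if for all $(a,b)\in A^2$ (allowing $a=b$), $a+b \notin A$. A set $B\subseteq\mathbb{N}$ is weakly sum-free if for all $(a,b)\in B^2$ with $a\neq b$, $a+b\notin B$. *)

(* Defs.v *)
From mathcomp Require Import all_boot.

(* A partition of {1,...,N} into m (possibly empty) labelled parts is encoded
   by a colouring c : nat -> nat with c x < m for every 1 <= x <= N; the part
   with label i is {x in [1,N] | c x = i}. *)
Definition is_colouring (N m : nat) (c : nat -> nat) : Prop :=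
  forall x, 1 <= x <= N -> c x < m.

Definition sumfree_partition (N m : nat) (c : nat -> nat) : Prop :=
  is_colouring N m c /\
  forall a b, 1 <= a <= N -> 1 <= b <= N -> a + b <= N ->
    c a = c b -> c (a + b) <> c a.

Definition weakly_sumfree_partition (N m : nat) (c : nat -> nat) : Prop :=
  is_colouring N m c /\
  forall a b, 1 <= a <= N -> 1 <= b <= N -> a <> b -> a + b <= N ->
    c a = c b -> c (a + b) <> c a.

Definition ceil_half (q : nat) : nat := (q + 1) %/ 2.

(* Main.v *)
Require Import Defs.
From mathcomp Require Import all_boot.
From mathcomp Require Import zify.

Definition col (q n h M : nat) (c1 c2 : nat -> nat) x :=
  if (q < x) && ((x + h) %% M <= q) then n + c2 ((x + h) %/ M)
  else c1 ((x + h) %% M - h).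

Lemma divmodU {M} K {t} : t < M -> (K * M + t) %/ M = K /\ (K * M + t) %% M = t.
Proof.
move=> tM; have M0 : 0 < M by lia.
by rewrite divnMDl // divn_small // addn0 modnMDl modn_small.
Qed.

Lemma colB {q n h M c1 c2 z K t} : z + h = K * M + t -> t < M -> q < z -> t <= q ->
  col q n h M c1 c2 z = n + c2 K.
Proof.
move=> E tM qz tq; rewrite /col E; have [-> ->] := divmodU K tM.
by rewrite qz tq.
Qed.

Lemma colA {q n h M c1 c2 z K t} : z + h = K * M + t -> t < M -> (z <= q \/ q < t) ->
  col q n h M c1 c2 z = c1 (t - h).
Proof.
move=> E tM H; rewrite /col E; have [-> ->] := divmodU K tM.
case: H => H.
  by rewrite ltnNge H.
by rewrite (leqNgt t q) H andbF.
Qed.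

Lemma classify p {q} n {h M} c1 c2 {x} :
  0 < q -> q <= 2 * h -> h <= q -> M = q + h + 1 ->
  1 <= x <= p * M + q ->
  (exists J s, x + h = J * M + s /\ s <= q /\ q < x /\ 1 <= J <= p /\
      col q n h M c1 c2 x = n + c2 J)
  \/ (exists J r, x = J * M + r /\ 1 <= r <= q /\ (J = 0 \/ q - h + 1 <= r) /\
      col q n h M c1 c2 x = c1 r).
Proof.
move=> q0 qh hq EM Hx.
have M0 : 0 < M by lia.
have E := divn_eq (x + h) M.
have sM := ltn_pmod (x + h) M0.
move: E sM; set J := (x + h) %/ M; set s := (x + h) %% M => E sM.
case B: ((q < x) && (s <= q)).
  left; exists J, s; move/andP: (B) => [qx sq].
  split; first by lia.
  split; first by [].
  split; first by [].
  split; first by nia.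
  by rewrite /col -/s -/J B.
right; exists J, (s - h).
have C : col q n h M c1 c2 x = c1 (s - h) by rewrite /col -/s B.
case: (leqP x q) => xq.
  have J0 : J = 0 by nia.
  rewrite J0 in E.
  split; first by lia.
  split; first by lia.
  split; first by left.
  by [].
have sq : q < s by move: B; rewrite xq /=; lia.
split; first by lia.
split; first by lia.
split; first by right; lia.
by [].
Qed.

Lemma mainlem p k q n h M c1 c2 :
  0 < q -> q <= 2 * h -> h <= q -> 2 * h <= q + 1 -> M = q + h + 1 ->
  weakly_sumfree_partition q n c1 -> sumfree_partition p k c2 ->
  weakly_sumfree_partition (p * M + q) (n + k) (col q n h M c1 c2).
Proof.
move=> q0 qh hq h2 EM [c1col c1w] [c2col c2s].
have M0 : 0 < M by lia.
split.
  move=> x Hx.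
  case: (classify p n c1 c2 q0 qh hq EM Hx) =>
    [[J [s [_ [_ [_ [HJ ->]]]]]] | [J [r [_ [Hr [_ ->]]]]]].
    have := c2col J HJ; lia.
  have := c1col r Hr; lia.
move=> a b Ha Hb ab sN Eq.
case: (classify p n c1 c2 q0 qh hq EM Ha) =>
    [[Ja [sa [Ea [saq [qa [HJa Ca]]]]]] | [Ja [ra [Ea [Hra [Jra Ca]]]]]];
case: (classify p n c1 c2 q0 qh hq EM Hb) =>
    [[Jb [sb [Eb [sbq [qb [HJb Cb]]]]]] | [Jb [rb [Eb [Hrb [Jrb Cb]]]]]];
  rewrite Ca; rewrite Ca Cb in Eq.
- have E2 : c2 Ja = c2 Jb by lia.
  case: (ltnP (sa + sb) h) => s1.
    have Ez : a + b + h = (Ja + Jb - 1) * M + (M + sa + sb - h) by nia.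
    rewrite (colA Ez); [|lia|right; lia].
    have := c1col (M + sa + sb - h - h); lia.
  case: (leqP (sa + sb) (q + h)) => s2.
    have Ez : a + b + h = (Ja + Jb) * M + (sa + sb - h) by nia.
    have Jp : Ja + Jb <= p by nia.
    rewrite (colB Ez); [|lia|lia|lia].
    have := c2s Ja Jb HJa HJb Jp E2; lia.
  have Ez : a + b + h = (Ja + Jb) * M + (sa + sb - h) by nia.
  rewrite (colA Ez); [|lia|right; lia].
  have := c1col (sa + sb - h - h); lia.
- have := c1col rb Hrb; lia.
- have := c1col ra Hra; lia.
- case: (leqP (ra + rb) q) => r1.
    have Ez : a + b + h = (Ja + Jb) * M + (ra + rb + h) by nia.
    have rab : ra <> rb.
      move=> err; subst rb.
      case: Jra => [Ja0|]; last by lia.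
      case: Jrb => [Jb0|]; last by lia.
      apply: ab; by rewrite Ea Eb Ja0 Jb0.
    have Hor : a + b <= q \/ q < ra + rb + h.
      case: Jra => [Ja0|]; last by right; lia.
      case: Jrb => [Jb0|]; last by right; lia.
      left; rewrite Ea Eb Ja0 Jb0; lia.
    rewrite (colA Ez); [|lia|exact Hor].
    rewrite addnK; apply: c1w => //; lia.
  have Ez : a + b + h = (Ja + Jb + 1) * M + (ra + rb - q - 1) by nia.
  rewrite (colB Ez); [|lia|nia|lia].
  have := c1col ra Hra; lia.
Qed.

Theorem theorem3p1 (p k q n : nat) :
  0 < p -> 0 < k -> 0 < q -> 0 < n ->
  (exists c, weakly_sumfree_partition q n c) ->
  (exists c, sumfree_partition p k c) ->
  exists c, weakly_sumfree_partition (p * (q + ceil_half q + 1) + q) (n + k) c.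
Proof.
move=> p0 k0 q0 n0 [c1 H1] [c2 H2].
exists (col q n (ceil_half q) (q + ceil_half q + 1) c1 c2).
apply: mainlem => //; rewrite /ceil_half; lia.
Qed.
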